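(* Every unary FA-presentable tournament $(X,\rightarrow)$ decomposes as a finite disjoint union of trivial tournaments, countably infinite complete ascending tournaments, countably infinite complete descending tournaments, countably infinite near-complete ascending tournaments, and countably infinite near-complete descending tournaments; that is, $X$ can be partitioned into finitely many subsets each of which, with the induced relation, is a one-element tournament or a countably infinite tournament of one of these four kinds.
   Context: A tournament is $(X,\rightarrow)$ with $x\not\rightarrow x$ for all $x$ and, for distinct $x,y$, exactly one of $x\rightarrow y$, $y\rightarrow x$. A countably infinite tournament on $X=\{x_i:i\in\mathbb{N}\}$ is complete ascending if $x_i\rightarrow x_j$ for all $i<j$; complete descending if $x_j\rightarrow x_i$ for all $i<j$; near-complete ascending if $x_{i+1}\rightarrow x_i$ for all $i$ and $x_i\rightarrow x_j$ for all $i<j-1$; near-complete descending if $x_i\rightarrow x_{i+1}$ for all $i$ and $x_j\rightarrow x_i$ for all $i<j-1$. A structure is unary FA-presentable if there exist a regular language $L\subseteq a^*$ and a surjection $\phi:L\to X$ such that $\{(u,v)\in L^2:u\phi=v\phi\}$ and $\{(u,v)\in L^2:u\phi\rightarrow v\phi\}$ are regular relations (the sets of words $\mathrm{conv}(u,v)$ over $\{a,\$\}^2$, reading $u,v$ in parallel and padding the shorter with $\$$, are regular languages). *)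

(* Defs.v *)
From mathcomp Require Import all_boot.
Set Implicit Arguments. Unset Strict Implicit. Unset Printing Implicit Defensive.

Record dfa (A : Type) := DFA {
  dfa_state : finType;
  dfa_start : dfa_state;
  dfa_delta : dfa_state -> A -> dfa_state;
  dfa_final : dfa_state -> bool }.
Arguments dfa_start {A} d.
Arguments dfa_delta {A} d _ _.
Arguments dfa_final {A} d _.

Definition dfa_accepts (A : Type) (D : dfa A) (w : seq A) : bool :=
  dfa_final D (foldl (dfa_delta D) (dfa_start D) w).

Definition regular (A : Type) (L : seq A -> Prop) : Prop :=
  exists D : dfa A, forall w, L w <-> dfa_accepts D w.

Definition unary_word := seq unit.

(* Padded alphabet {a,$}: Some tt = a, None = $. Convolution alphabet {a,$}^2. *)
Definition conv_letter := (option unit * option unit)%type.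

Definition conv (u v : unary_word) : seq conv_letter :=
  [seq (nth None (map Some u) i, nth None (map Some v) i) | i <- iota 0 (maxn (size u) (size v))].

Definition regular_rel (P : unary_word -> unary_word -> Prop) : Prop :=
  regular (fun c : seq conv_letter => exists u v, c = conv u v /\ P u v).

Definition tournament (X : Type) (R : X -> X -> Prop) : Prop :=
  (forall x, ~ R x x) /\
  (forall x y, x <> y -> (R x y \/ R y x) /\ ~ (R x y /\ R y x)).

Definition unary_FA_presentable (X : Type) (R : X -> X -> Prop) : Prop :=
  exists (L : unary_word -> Prop) (phi : unary_word -> X),
    regular L /\
    (forall x : X, exists w, L w /\ phi w = x) /\
    regular_rel (fun u v => L u /\ L v /\ phi u = phi v) /\
    regular_rel (fun u v => L u /\ L v /\ R (phi u) (phi v)).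

Definition complete_ascending (X : Type) (R : X -> X -> Prop) (x : nat -> X) :=
  forall i j, i < j -> R (x i) (x j).
Definition complete_descending (X : Type) (R : X -> X -> Prop) (x : nat -> X) :=
  forall i j, i < j -> R (x j) (x i).
Definition near_complete_ascending (X : Type) (R : X -> X -> Prop) (x : nat -> X) :=
  (forall i, R (x i.+1) (x i)) /\ (forall i j, i < j.-1 -> R (x i) (x j)).
Definition near_complete_descending (X : Type) (R : X -> X -> Prop) (x : nat -> X) :=
  (forall i, R (x i) (x i.+1)) /\ (forall i j, i < j.-1 -> R (x j) (x i)).

Definition good_block (X : Type) (R : X -> X -> Prop) (P : X -> Prop) : Prop :=
  (exists x0, forall y, P y <-> y = x0) \/
  (exists x : nat -> X,
      (forall i j, x i = x j -> i = j) /\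
      (forall y, P y <-> exists i, x i = y) /\
      (complete_ascending R x \/ complete_descending R x \/
       near_complete_ascending R x \/ near_complete_descending R x)).

(* Main.v *)
Require Import Defs.
From mathcomp Require Import all_boot boolp zify.
From Stdlib Require Classical_Prop.
Set Implicit Arguments. Unset Strict Implicit. Unset Printing Implicit Defensive.

Lemma unary_nseq (u : unary_word) : u = nseq (size u) tt.
Proof. by elim: u => [|[] u IH] //=; rewrite -IH. Qed.

Lemma nth_some (u : unary_word) i :
  nth None (map Some u) i = if i < size u then Some tt else None.
Proof.
case: ltnP => H.
  by rewrite (nth_map tt) //; case: (nth tt u i).
by rewrite nth_default // size_map.
Qed.

Lemma size_conv u v : size (conv u v) = maxn (size u) (size v).
Proof. by rewrite /conv size_map size_iota. Qed.

Lemma nth_conv u v i : i < maxn (size u) (size v) ->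
  nth (None, None) (conv u v) i =
  (if i < size u then Some tt else None, if i < size v then Some tt else None).
Proof.
move=> Hi; rewrite /conv (nth_map 0); last by rewrite size_iota.
by rewrite nth_iota // add0n !nth_some.
Qed.

Lemma conv_nseq m d :
  conv (nseq m tt) (nseq (m + d) tt) =
  nseq m (Some tt, Some tt) ++ nseq d (None, Some tt).
Proof.
apply: (@eq_from_nth _ (None, None)).
  by rewrite size_conv size_cat !size_nseq; lia.
move=> i; rewrite size_conv !size_nseq => Hi.
have Hmx : maxn m (m + d) = m + d by apply/maxn_idPr; apply: leq_addr.
rewrite Hmx in Hi.
rewrite nth_conv ?size_nseq ?Hmx // nth_cat !size_nseq !nth_nseq.
rewrite Hi.
case: (ltnP i m) => H1 //.
have -> : i - m < d by lia.
by [].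
Qed.

Lemma conv_size_le u v u' v' : conv u v = conv u' v' -> size u <= size u'.
Proof.
move=> E; rewrite leqNgt; apply/negP => H.
have Hs := congr1 size E; rewrite !size_conv in Hs.
have H1 : size u' < maxn (size u) (size v) by lia.
have := congr1 (fun c => nth (None,None) c (size u')) E => /=.
rewrite nth_conv // nth_conv -?Hs // H ltnn.
by case.
Qed.

Lemma conv_size_le2 u v u' v' : conv u v = conv u' v' -> size v <= size v'.
Proof.
move=> E; rewrite leqNgt; apply/negP => H.
have Hs := congr1 size E; rewrite !size_conv in Hs.
have H1 : size v' < maxn (size u) (size v) by lia.
have := congr1 (fun c => nth (None,None) c (size v')) E => /=.
rewrite nth_conv // nth_conv -?Hs // H ltnn.
by case.
Qed.

Lemma conv_inj u v u' v' : conv u v = conv u' v' -> u = u' /\ v = v'.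
Proof.
move=> E.
have h1 : size u = size u' by apply/eqP; rewrite eqn_leq (conv_size_le E) (conv_size_le (esym E)).
have h2 : size v = size v' by apply/eqP; rewrite eqn_leq (conv_size_le2 E) (conv_size_le2 (esym E)).
by rewrite (unary_nseq u) (unary_nseq u') (unary_nseq v) (unary_nseq v') h1 h2.
Qed.

Lemma foldl_nseq (S A : Type) (f : S -> A -> S) s k x :
  foldl f s (nseq k x) = iter k (fun s => f s x) s.
Proof. by elim: k s => [|k IH] s //=; rewrite IH -iterSr. Qed.

Definition gA (D : dfa conv_letter) s := dfa_delta D s (Some tt, Some tt).
Definition gD (D : dfa conv_letter) s := dfa_delta D s (None, Some tt).
Arguments gA : clear implicits.
Arguments gD : clear implicits.

Lemma rel_accept (P : unary_word -> unary_word -> Prop) (D : dfa conv_letter) :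
  (forall c, (exists u v, c = conv u v /\ P u v) <-> dfa_accepts D c) ->
  forall m d, P (nseq m tt) (nseq (m + d) tt) <->
    dfa_final D (iter d (gD D) (iter m (gA D) (dfa_start D))).
Proof.
move=> HD m d.
have E : dfa_accepts D (conv (nseq m tt) (nseq (m + d) tt)) =
   dfa_final D (iter d (gD D) (iter m (gA D) (dfa_start D))).
  by rewrite /dfa_accepts conv_nseq foldl_cat !foldl_nseq.
rewrite -E -HD; split.
  by move=> HP; exists (nseq m tt), (nseq (m + d) tt).
by move=> [u [v [Ec HP]]]; have [-> ->] := conv_inj Ec.
Qed.

Lemma ev_periodic (A : finType) (g : A -> A) (a : A) :
  exists T P, 0 < P /\ forall k, T <= k -> iter (k + P) g a = iter k g a.
Proof.
pose h (i : 'I_(#|A|.+1)) := iter i g a.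
have : ~~ injectiveb h.
  apply/negP => /injectiveP Hi.
  by have := leq_card h Hi; rewrite card_ord ltnn.
move/injectivePn => [i [j Hij Eh]].
have key : forall i j : nat, i < j -> iter i g a = iter j g a ->
   exists T P, 0 < P /\ forall k, T <= k -> iter (k + P) g a = iter k g a.
  move=> i0 j0 Hlt E0; exists i0, (j0 - i0); split; first lia.
  move=> k Hk.
  have -> : k + (j0 - i0) = (k - i0) + j0 by lia.
  by rewrite iterD -E0 -iterD subnK.
rewrite /h in Eh.
case: (ltngtP i j) => H.
- exact: key H Eh.
- exact: key H (esym Eh).
- by move: Hij; rewrite (val_inj H) eqxx.
Qed.

Lemma per_eq (A : Type) (g : A -> A) (a : A) T P :
  (forall k, T <= k -> iter (k + P) g a = iter k g a) ->
  forall k k', T <= k -> T <= k' -> k %% P = k' %% P -> iter k g a = iter k' g a.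
Proof.
move=> HP.
have mult : forall k q, T <= k -> iter (k + q * P) g a = iter k g a.
  move=> k q Hk; elim: q => [|q IH]; first by rewrite addn0.
  by rewrite mulSn addnA (addnC k P) -addnA addnC HP ?IH //; lia.
have main : forall k k', T <= k -> k <= k' -> k %% P = k' %% P -> iter k g a = iter k' g a.
  move=> k k' Hk Hle Hm.
  have : P %| k' - k by rewrite -eqn_mod_dvd // Hm.
  move/dvdnP => [q Hq].
  have -> : k' = k + q * P by lia.
  by rewrite mult.
move=> k k' Hk Hk' Hm.
case: (leqP k k') => H; first exact: main.
by rewrite (main k' k) // ltnW.
Qed.

Lemma ev_periodic_unif (A : finType) (g : A -> A) :
  exists T P, 0 < P /\ forall s k k', T <= k -> T <= k' -> k %% P = k' %% P ->
    iter k g s = iter k' g s.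
Proof.
pose G (h : {ffun A -> A}) := [ffun s => g (h s)].
have HG : forall k, iter k G [ffun s => s] = [ffun s => iter k g s].
  elim=> [|k IH]; first by apply/ffunP => s; rewrite !ffunE.
  by rewrite iterS IH; apply/ffunP => s; rewrite !ffunE.
have [T [P [HP HT]]] := ev_periodic G [ffun s => s].
exists T, P; split => // s k k' Hk Hk' Hm.
have := per_eq HT Hk Hk' Hm; rewrite !HG => E.
have := congr1 (fun h : {ffun A -> A} => h s) E.
by rewrite /= !ffunE.
Qed.

Lemma dfa_key (D : dfa conv_letter) :
  exists T M, 0 < M /\ forall m n m' n', T <= m -> m < n -> T <= m' -> m' < n' ->
    n %% M = m %% M -> m' %% M = m %% M -> n' %% M = m %% M ->
    dfa_final D (iter (n - m) (gD D) (iter m (gA D) (dfa_start D))) =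
    dfa_final D (iter (n' - m') (gD D) (iter m' (gA D) (dfa_start D))).
Proof.
have [T1 [P1 [HP1 H1]]] := ev_periodic (gA D) (dfa_start D).
have [T2 [P2 [HP2 H2]]] := ev_periodic_unif (gD D).
pose M := P1 * P2 * T2.+1.
have HM : 0 < M by rewrite /M !muln_gt0 HP1 HP2.
have HMT : T2 < M.
  rewrite /M -mulnA; apply: (leq_trans _ (leq_pmull _ HP1)).
  by apply: leq_pmull.
have d1 : P1 %| M by rewrite /M -mulnA dvdn_mulr.
have d2 : P2 %| M by rewrite /M (mulnC P1) -mulnA dvdn_mulr.
exists T1, M; split => // m n m' n' Hm Hmn Hm' Hmn' En Em' En'.
have EA : iter m (gA D) (dfa_start D) = iter m' (gA D) (dfa_start D).
  apply: (per_eq H1) => //.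
  by rewrite -(modn_dvdm m d1) -(modn_dvdm m' d1) Em'.
rewrite EA.
have dv : forall a b, a < b -> b %% M = a %% M -> M %| b - a.
  by move=> a b Hab E; rewrite -eqn_mod_dvd ?E // ltnW.
have Hd1 := dv _ _ Hmn En.
have Hd2 : M %| n' - m' by apply: dv => //; rewrite En' Em'.
congr (dfa_final D _); apply: H2.
- apply: ltnW; apply: (leq_trans HMT); apply: (dvdn_leq _ Hd1); by rewrite subn_gt0.
- apply: ltnW; apply: (leq_trans HMT); apply: (dvdn_leq _ Hd2); by rewrite subn_gt0.
- have := dvdn_trans d2 Hd1; have := dvdn_trans d2 Hd2.
  by rewrite /dvdn => /eqP -> /eqP ->.
Qed.

Lemma enum_inf (S : nat -> Prop) : (forall b, exists n, b <= n /\ S n) ->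
  exists f : nat -> nat, (forall i j, i < j -> f i < f j) /\
    (forall n, S n <-> exists i, f i = n).
Proof.
move=> Hinf.
have Hnext : forall b, exists n, `[< S n >] && (b <= n).
  by move=> b; have [n [Hb Hn]] := Hinf b; exists n; apply/andP; split => //; apply/(asboolP _).
pose g b := ex_minn (Hnext b).
have gS : forall b, S (g b) /\ b <= g b.
  by move=> b; rewrite /g; case: ex_minnP => m /andP [/(asboolP _) ? ?].
have gmin : forall b n, S n -> b <= n -> g b <= n.
  move=> b n Sn Hb; rewrite /g; case: ex_minnP => m _ Hmin.
  by apply: Hmin; apply/andP; split => //; apply/(asboolP _).
pose f i := iter i (fun n => g n.+1) (g 0).
have fS : forall i, f i.+1 = g (f i).+1 by move=> i; rewrite /f iterS.
have finc : forall i, f i < f i.+1 by move=> i; rewrite fS; exact: (gS _).2.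
have fmono : forall i j, i < j -> f i < f j.
  move=> i j; elim: j => [|j IH] //; rewrite ltnS leq_eqVlt => /orP [/eqP ->|H].
    exact: finc.
  exact: ltn_trans (IH H) (finc j).
have fge : forall i, i <= f i.
  elim=> [|i IH] //; exact: leq_ltn_trans IH (finc i).
have fSS : forall i, S (f i) by case=> [|i]; [exact: (gS 0).1 | rewrite fS; exact: (gS _).1].
have cover : forall i n, S n -> n <= f i -> exists j, f j = n.
  elim=> [|i IH] n Sn Hn.
    by exists 0; apply/eqP; rewrite eqn_leq Hn gmin.
  case: (leqP n (f i)) => H; first exact: IH.
  exists i.+1; apply/eqP; rewrite eqn_leq Hn fS gmin //.
exists f; split => // n; split.
  by move=> Sn; apply: (cover n) => //; exact: fge.
by move=> [i <-].
Qed.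

Lemma choose_T (Q : nat -> nat -> Prop) K : exists T', forall r, r < K ->
  (forall b, exists n, b <= n /\ Q r n) \/ (forall n, T' <= n -> ~ Q r n).
Proof.
elim: K => [|K [T IH]]; first by exists 0.
case: (Classical_Prop.classic (forall b, exists n, b <= n /\ Q K n)) => H.
  exists T => r; rewrite ltnS leq_eqVlt => /orP [/eqP ->|Hr]; first by left.
  exact: IH.
have [b Hb] : exists b, forall n, b <= n -> ~ Q K n.
  apply: Classical_Prop.NNPP => Hn; apply: H => b; apply: Classical_Prop.NNPP => Hb; apply: Hn; exists b.
  by move=> n Hbn HQ; apply: Hb; exists n.
exists (maxn T b) => r; rewrite ltnS leq_eqVlt => /orP [/eqP ->|Hr].
  by right => n Hn; apply: Hb; lia.
case: (IH r Hr) => [?|H2]; first by left.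
by right => n Hn; apply: H2; lia.
Qed.

Lemma good_block_ext (X : Type) (R : X -> X -> Prop) (P Q : X -> Prop) :
  (forall y, P y <-> Q y) -> good_block R P -> good_block R Q.
Proof.
move=> E [[x0 H]|[x [Hi [Hm Hk]]]].
  by left; exists x0 => y; rewrite -E.
by right; exists x; split => //; split => // y; rewrite -E.
Qed.

Lemma compress (X : Type) (R : X -> X -> Prop) (c : X -> nat) K :
  (forall y, c y < K) ->
  (forall i, i < K -> (exists y, c y = i) -> good_block R (fun y => c y = i)) ->
  exists (k : nat) (blk : X -> nat),
    (forall y, blk y < k) /\ (forall i, i < k -> good_block R (fun y => blk y = i)).
Proof.
move=> HK Hg.
pose s := [seq i <- iota 0 K | `[< exists y, c y = i >]].
have ins : forall y, c y \in s.
  move=> y; rewrite mem_filter mem_iota add0n (HK y) leq0n /= andbT; apply/(asboolP _); by exists y.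
have us : uniq s by rewrite filter_uniq // iota_uniq.
exists (size s), (fun y => index (c y) s); split.
  by move=> y; rewrite index_mem.
move=> i Hi.
have : nth 0 s i \in s by apply: mem_nth.
rewrite mem_filter mem_iota add0n => /andP [/(asboolP _) Hex HlK].
apply: (good_block_ext _ (Hg _ HlK Hex)) => y; split.
  by move=> ->; rewrite index_uniq.
by move=> <-; rewrite nth_index.
Qed.

Unset Implicit Arguments.
Theorem corollary5p14 (X : Type) (R : X -> X -> Prop) :
  tournament R -> unary_FA_presentable R ->
  exists (k : nat) (blk : X -> nat),
    (forall y, blk y < k) /\
    (forall i, i < k -> good_block R (fun y => blk y = i)).
Proof.
move=> [Hirr Htot] [L [phi [_ [Hsurj [_ [DR HDR]]]]]].
have Hrel := rel_accept HDR.
have [T1 [M [HM Hkey]]] := dfa_key DR.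
have Hex : forall x, exists n, `[< L (nseq n tt) /\ phi (nseq n tt) = x >].
  move=> x; have [w [Lw Pw]] := Hsurj x; exists (size w); apply/(asboolP _).
  by rewrite -unary_nseq.
pose idx x := ex_minn (Hex x).
have idx_spec : forall x, L (nseq (idx x) tt) /\ phi (nseq (idx x) tt) = x.
  by move=> x; rewrite /idx; case: ex_minnP => n /(asboolP _).
have idx_inj : forall y z, idx y = idx z -> y = z.
  by move=> y z E; rewrite -(idx_spec y).2 -(idx_spec z).2 E.
have dir : forall y z y' z', T1 <= idx y -> idx y < idx z ->
    T1 <= idx y' -> idx y' < idx z' ->
    idx z %% M = idx y %% M -> idx y' %% M = idx y %% M -> idx z' %% M = idx y %% M ->
    R y z -> R y' z'.
  move=> y z y' z' H1 H2 H3 H4 E1 E2 E3 Ryz.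
  have Hr : forall a b, idx a < idx b -> (R a b <->
     dfa_final DR (iter (idx b - idx a) (gD DR) (iter (idx a) (gA DR) (dfa_start DR)))).
    move=> a b Hab; rewrite -Hrel subnKC ?(ltnW Hab) //.
    have [La Pa] := idx_spec a; have [Lb Pb] := idx_spec b.
    by rewrite Pa Pb; split => // [[_ [_ ?]]].
  apply/(Hr _ _ H4); rewrite -(Hkey (idx y) (idx z)) //; exact/(Hr _ _ H2).
have [T' HT'] := choose_T (fun r n => exists y, idx y = n /\ n %% M = r) M.
pose T := maxn T' T1.
pose c y := if idx y < T then idx y else T + idx y %% M.
apply: (compress (c := c) (K := T + M)).
  move=> y; rewrite /c; case: ifP => H; first exact: ltn_addr.
  by rewrite ltn_add2l ltn_pmod.
move=> i Hi [y Hy].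
case: (ltnP i T) => HiT.
  have Ey : idx y = i.
    move: Hy; rewrite /c; case: ifP => // _ E; rewrite -E in HiT; lia.
  left; exists y => z; split; last by move=> ->.
  rewrite /c; case: ifP => Hz E.
    by apply: idx_inj; rewrite E Ey.
  rewrite -E in HiT; lia.
pose r := i - T.
have Hr : r < M by rewrite /r; lia.
have cE : forall z, c z = i <-> T <= idx z /\ idx z %% M = r.
  move=> z; rewrite /c; case: ifP => Hz; split.
  - move=> E; rewrite -E in HiT; lia.
  - move=> [? _]; lia.
  - move=> E; split; first lia. rewrite /r -E; lia.
  - move=> [_ E]; rewrite E /r; lia.
have [HyT Hyr] := (cE y).1 Hy.
have Hinf : forall b, exists n, b <= n /\ (T <= n /\ exists y, idx y = n /\ n %% M = r).
  case: (HT' r Hr) => [Hi2|Hfin]; last first.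
    exfalso; apply: (Hfin (idx y)); first by rewrite /T in HyT; lia.
    by exists y.
  move=> b; have [n [Hbn HQ]] := Hi2 (maxn b T); exists n; split; first lia.
  by split => //; lia.
have [f [fmono fS]] := enum_inf Hinf.
have Sidx : forall n, (T <= n /\ exists y, idx y = n /\ n %% M = r) ->
    idx (phi (nseq n tt)) = n.
  by move=> n [_ [z [<- _]]]; rewrite (idx_spec z).2.
pose x j := phi (nseq (f j) tt).
have idx_x : forall j, idx (x j) = f j.
  by move=> j; apply: Sidx; apply/fS; exists j.
have x_prop : forall j, T <= f j /\ f j %% M = r.
  move=> j; have [? [z [Ez Em]]] : (T <= f j /\ exists y, idx y = f j /\ f j %% M = r)
    by apply/fS; exists j.
  by [].
have finj : forall j j', f j = f j' -> j = j'.
  move=> j j' E; case: (ltngtP j j') => // H.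
  - by have := fmono _ _ H; rewrite E ltnn.
  - by have := fmono _ _ H; rewrite E ltnn.
right; exists x; split.
  by move=> j j' E; apply: finj; rewrite -!idx_x E.
split.
  move=> z; rewrite cE; split.
    move=> [H1 H2].
    have : exists j, f j = idx z by apply/fS; split => //; exists z.
    move=> [j Ej]; exists j; rewrite /x Ej; exact: (idx_spec z).2.
  by move=> [j <-]; rewrite idx_x; exact: x_prop.
have Tge : T1 <= T by rewrite /T; lia.
have dirx : forall j1 j2 j3 j4, j1 < j2 -> j3 < j4 -> R (x j1) (x j2) -> R (x j3) (x j4).
  move=> j1 j2 j3 j4 H12 H34.
  have [a1 b1] := x_prop j1; have [a2 b2] := x_prop j2.
  have [a3 b3] := x_prop j3; have [a4 b4] := x_prop j4.
  move=> HR12.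
  apply: (dir (x j1) (x j2)); rewrite ?idx_x.
  - exact: leq_trans Tge a1.
  - exact: fmono.
  - exact: leq_trans Tge a3.
  - exact: fmono.
  - by rewrite b1 b2.
  - by rewrite b1 b3.
  - by rewrite b1 b4.
  - exact: HR12.
case: (Classical_Prop.classic (R (x 0) (x 1))) => H01.
  by left => i0 j0 H; apply: (dirx 0 1).
right; left => i0 j0 H.
have Hne : x i0 <> x j0.
  move=> E; have := congr1 idx E; rewrite !idx_x => /finj E'.
  by rewrite E' ltnn in H.
have [[H1|H1] _] := Htot _ _ Hne; last exact: H1.
by exfalso; apply: H01; apply: (dirx i0 j0).
Qed.
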